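(* Let $k\in\omega$. For every partition $\mathbb{C}_k=\bigcup_{i<2^k}X_i$ into $2^k$ pieces there is $i<2^k$ such that $\bigcup X_i=[0,1]^n$.
   Context: Fix a positive integer $n$ and real $0<r<n$. For each $k\in\omega$ fix $M_k\in\omega$ so large that $2^k(\sqrt{n}/M_k)^r<2^{-k}$. $C_k$ is the set of all cubes $[\frac{j_0}{M_k},\frac{j_0+1}{M_k}]\times\cdots\times[\frac{j_{n-1}}{M_k},\frac{j_{n-1}+1}{M_k}]$ with $j_i\in\{0,\dots,M_k-1\}$ for each $i<n$. $\mathbb{C}_k$ is the set of all subsets of $[0,1]^n$ that can be written as the union of $2^k$ (not necessarily distinct) elements of $C_k$. For $X\subset\mathbb{C}_k$, $\bigcup X$ denotes the union of the members of $X$. *)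

(* Defs.v *)
From Stdlib Require Import Reals Lra.
Open Scope R_scope.

(* Points of R^n are encoded as functions nat -> R; only coordinates i < n matter.
   All sets below only inspect coordinates i < n. *)
Definition point := nat -> R.
Definition rset := point -> Prop.

Definition unit_cube (n : nat) : rset :=
  fun x => forall i, (i < n)%nat -> 0 <= x i <= 1.

Definition valid_index (n M : nat) (j : nat -> nat) : Prop :=
  forall i, (i < n)%nat -> (j i < M)%nat.

Definition grid_cube (n M : nat) (j : nat -> nat) : rset :=
  fun x => forall i, (i < n)%nat ->
    INR (j i) / INR M <= x i <= (INR (j i) + 1) / INR M.

Definition C_cubes (n M : nat) (Q : rset) : Prop :=
  exists j, valid_index n M j /\ (forall x, Q x <-> grid_cube n M j x).

(* bold C_k: sets that are a union of 2^k (not necessarily distinct) elements of C_k. *)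
Definition CC (n M k : nat) (A : rset) : Prop :=
  exists Qs : nat -> rset,
    (forall m, (m < 2 ^ k)%nat -> C_cubes n M (Qs m)) /\
    (forall x, A x <-> exists m, (m < 2 ^ k)%nat /\ Qs m x).

Definition bigU (X : rset -> Prop) : rset :=
  fun x => exists A, X A /\ A x.

(* X_0,...,X_{N-1} is a partition of the family F (pieces may be empty). *)
Definition is_partition (F : rset -> Prop) (N : nat) (X : nat -> rset -> Prop) : Prop :=
  (forall i A, (i < N)%nat -> X i A -> F A) /\
  (forall A, F A -> exists i, (i < N)%nat /\ X i A) /\
  (forall i i' A, (i < N)%nat -> (i' < N)%nat -> X i A -> X i' A -> i = i').

(* Main.v *)
Require Import Defs.
From Stdlib Require Import Reals Lra Lia ZArith ClassicalEpsilon Classical.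
Open Scope R_scope.

Definition jf (M : nat) (y : R) : nat :=
  Nat.min (Z.to_nat (up (y * INR M) - 1)) (M - 1).

Lemma divle (a y m : R) : 0 < m -> a <= y * m -> a / m <= y.
Proof. intros Hm H. apply (Rmult_le_reg_r m); auto.
  replace (a / m * m) with a by (field; lra). lra. Qed.

Lemma ledivr (a y m : R) : 0 < m -> y * m <= a -> y <= a / m.
Proof. intros Hm H. apply (Rmult_le_reg_r m); auto.
  replace (a / m * m) with a by (field; lra). lra. Qed.

Lemma jf_ok (M : nat) (y : R) : (0 < M)%nat -> 0 <= y <= 1 ->
  (jf M y < M)%nat /\ INR (jf M y) / INR M <= y <= (INR (jf M y) + 1) / INR M.
Proof.
  intros HM Hy.
  assert (Hm : 0 < INR M) by (apply lt_0_INR; lia).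
  assert (Hym : 0 <= y * INR M <= INR M) by nra.
  destruct (archimed (y * INR M)) as [H1 H2].
  set (z := (up (y * INR M) - 1)%Z) in *.
  assert (Hz : IZR z = IZR (up (y * INR M)) - 1) by (unfold z; rewrite minus_IZR; reflexivity).
  assert (Hz0 : (0 <= z)%Z).
  { assert (0 < up (y * INR M))%Z by (apply lt_IZR; lra). lia. }
  assert (Ht : INR (Z.to_nat z) = IZR z) by (rewrite INR_IZR_INZ, Z2Nat.id; auto).
  unfold jf; fold z. split; [lia|].
  destruct (Nat.le_gt_cases (Z.to_nat z) (M - 1)) as [Hle|Hgt].
  - rewrite Nat.min_l by auto. rewrite Ht. split.
    + apply divle; lra.
    + apply ledivr; lra.
  - rewrite Nat.min_r by lia.
    assert (HMt : INR M <= INR (Z.to_nat z)) by (apply le_INR; lia).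
    rewrite minus_INR by lia. simpl INR. split.
    + apply divle; lra.
    + apply ledivr; lra.
Qed.

Lemma Mpos (n : nat) (r : R) (M : nat -> nat)
  (hM : forall k : nat,
      2 ^ k * Rpower (sqrt (INR n) / INR (M k)) r < / 2 ^ k) k : (0 < M k)%nat.
Proof.
  destruct (M k) eqn:E; [|lia]. exfalso.
  specialize (hM k). rewrite E in hM. simpl INR in hM.
  unfold Rdiv in hM. rewrite Rinv_0, Rmult_0_r in hM.
  unfold Rpower in hM.
  assert (ln 0 = 0) by (unfold ln; destruct (Rlt_dec 0 0) as [h|h]; [exfalso; exact (Rlt_irrefl _ h)|reflexivity]).
  rewrite H, Rmult_0_r, exp_0, Rmult_1_r in hM.
  assert (1 <= 2 ^ k) by (apply pow_R1_Rle; lra).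
  assert (/ 2 ^ k <= 1).
  { rewrite <- Rinv_1. apply Rinv_le_contravar; lra. }
  lra.
Qed.

Theorem lemma4p3 (n : nat) (r : R) (M : nat -> nat)
  (hn : (0 < n)%nat) (hr0 : 0 < r) (hrn : r < INR n)
  (hM : forall k : nat,
      2 ^ k * Rpower (sqrt (INR n) / INR (M k)) r < / 2 ^ k)
  (k : nat) (X : nat -> rset -> Prop)
  (hX : is_partition (CC n (M k) k) (2 ^ k) X) :
  exists i, (i < 2 ^ k)%nat /\ (forall x, bigU (X i) x <-> unit_cube n x).
Proof.
  pose proof (Mpos n r M hM k) as HM.
  set (Mk := M k) in *. clearbody Mk.
  destruct hX as [HF [Hcov Huniq]].
  assert (Hsub : forall i x, (i < 2 ^ k)%nat -> bigU (X i) x -> unit_cube n x).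
  { intros i x Hi [A [HA Ax]].
    destruct (HF i A Hi HA) as [Qs [HQ HAe]].
    destruct (proj1 (HAe x) Ax) as [m [Hm Qx]].
    destruct (HQ m Hm) as [j [Hj HQe]].
    pose proof (proj1 (HQe x) Qx) as G.
    assert (Hm0 : 0 < INR Mk) by (apply lt_0_INR; lia).
    intros c Hc. specialize (G c Hc). specialize (Hj c Hc).
    assert (INR (j c) + 1 <= INR Mk).
    { replace (INR (j c) + 1) with (INR (S (j c))) by (rewrite S_INR; auto).
      apply le_INR; lia. }
    assert (0 <= INR (j c)) by apply pos_INR.
    destruct G as [G1 G2]; split.
    - eapply Rle_trans; [|exact G1]. unfold Rdiv. apply Rmult_le_pos; auto.
      left; apply Rinv_0_lt_compat; auto.
    - eapply Rle_trans; [exact G2|]. apply (Rmult_le_reg_r (INR Mk)); auto.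
      replace ((INR (j c) + 1) / INR Mk * INR Mk) with (INR (j c) + 1) by (field; lra).
      lra. }
  apply NNPP. intro Hno.
  assert (Hpt : forall i, exists x, (i < 2 ^ k)%nat -> unit_cube n x /\ ~ bigU (X i) x).
  { intro i. destruct (Nat.lt_ge_cases i (2 ^ k)) as [Hi|Hi].
    - apply NNPP. intro Hn. apply Hno. exists i. split; auto.
      intro x. split; [apply Hsub; auto|]. intro Ux. apply NNPP. intro Nb.
      apply Hn. exists x. intros _. auto.
    - exists (fun _ => 0). intros; lia. }
  set (xs := fun i => proj1_sig (constructive_indefinite_description _ (Hpt i))).
  assert (Hxs : forall i, (i < 2 ^ k)%nat -> unit_cube n (xs i) /\ ~ bigU (X i) (xs i)).
  { intros i Hi. unfold xs. destruct (constructive_indefinite_description _ (Hpt i)); simpl; auto. }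
  set (Qs := fun m => grid_cube n Mk (fun c => jf Mk (xs m c))).
  set (A := fun y => exists m, (m < 2 ^ k)%nat /\ Qs m y).
  assert (HA : CC n Mk k A).
  { exists Qs. split; [|intro; unfold A; tauto].
    intros m Hm. exists (fun c => jf Mk (xs m c)). split; [|intro; unfold Qs; tauto].
    intros c Hc. destruct (Hxs m Hm) as [U _].
    apply (jf_ok Mk (xs m c) HM (U c Hc)). }
  destruct (Hcov A HA) as [i [Hi XiA]].
  destruct (Hxs i Hi) as [U NB]. apply NB. exists A. split; auto.
  exists i. split; auto. unfold Qs, grid_cube. intros c Hc.
  apply (jf_ok Mk (xs i c) HM (U c Hc)).
Qed.
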